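(* Consider the online firefighter game on the infinite square grid $\mathbb{L}_2=\mathbb{Z}\times\mathbb{Z}$ (described in the context). There is an online strategy for Player 1 that wins against every firefighter sequence $(f_i)_{i\geq 1}$ revealed by Player 2 which satisfies both: (i) there exists $N\geq 1$ with $\sum_{i=1}^N f_i\geq 4N$; and (ii) there exists an index $M\geq 1$ such that $f_i\geq 1$ for all $i\geq M$ and $f_i=0$ for all $i<M$.
   Context: The grid $\mathbb{L}_2$ has vertex set $\mathbb{Z}\times\mathbb{Z}$, with $(x,y)$ adjacent to $(x',y')$ iff $|x-x'|+|y-y'|=1$. A fire starts at an ignition vertex $v$ at time $0$ (so $v$ is burning). A firefighter sequence is a sequence $(f_i)_{i\geq 1}$ of non-negative integers. At each turn $i\geq 1$: Player 1 chooses at most $f_i$ vertices that are neither burning nor protected and protects them; then the fire spreads from every burning vertex to all of its unprotected neighbours. Once a vertex is burning or protected it remains so forever; unused firefighters are not carried over. Player 2 wins if at every turn some new vertex starts burning; otherwise Player 1 wins (the fire is contained). In the online version the sequence is chosen by Player 2 and revealed turn by turn: at turn $i$ Player 2 reveals $f_i$ to Player 1 just before Player 1 places firefighters, so an online strategy of Player 1 chooses its moves at turn $i$ based only on $f_1,\dots,f_i$ and the history of the game so far (in particular without knowing $M$ or $N$ in advance). *)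

(* Defs.v *)
From mathcomp Require Import all_boot all_order all_algebra.
Set Implicit Arguments. Unset Strict Implicit. Unset Printing Implicit Defensive.
Import Order.TTheory GRing.Theory Num.Theory.

Definition vertex := (int * int)%type.

Definition adjacent (p q : vertex) : Prop :=
  (`|p.1 - q.1|%N + `|p.2 - q.2|%N = 1)%N.

(* A firefighter sequence is f : nat -> nat, where f i is f_i for i >= 1
   (the value f 0 is irrelevant). *)
Definition prefix (f : nat -> nat) (i : nat) : seq nat :=
  [seq f j | j <- iota 1 i].

(* An online strategy of Player 1: given the revealed values f_1,...,f_i
   (as the list [f_1; ...; f_i]) it returns the vertices protected at turn i.
   Since the strategy is deterministic and the ignition vertex is fixed,
   the whole history of the game is a function of f_1..f_{i-1}, so this
   captures "moves based on f_1..f_i and the history so far". *)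
Definition online_strategy := seq nat -> seq vertex.

Fixpoint game_state (v : vertex) (s : online_strategy) (f : nat -> nat)
    (i : nat) : (vertex -> Prop) * (vertex -> Prop) :=
  match i with
  | 0 => (fun _ => False, fun x => x = v)
  | i'.+1 =>
      let P := (game_state v s f i').1 in
      let B := (game_state v s f i').2 in
      let P' := fun x => P x \/ x \in s (prefix f i) in
      (P', fun x => B x \/ (~ P' x /\ exists y, adjacent y x /\ B y))
  end.

Definition protected v s f i := (game_state v s f i).1.
Definition burning v s f i := (game_state v s f i).2.

Definition legal_play (v : vertex) (s : online_strategy) (f : nat -> nat) :=
  forall i, (1 <= i)%N ->
    (size (s (prefix f i)) <= f i)%N /\
    forall x, x \in s (prefix f i) ->
      ~ burning v s f i.-1 x /\ ~ protected v s f i.-1 x.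

Definition player1_wins (v : vertex) (s : online_strategy) (f : nat -> nat) :=
  exists i, (1 <= i)%N /\
    forall x, burning v s f i x -> burning v s f i.-1 x.

(* Main.v *)
Require Import Defs.
From mathcomp Require Import all_boot all_order all_algebra.
From mathcomp Require Import zify ring.
From Stdlib Require Classical_Prop.
Set Implicit Arguments. Unset Strict Implicit. Unset Printing Implicit Defensive.
Import Order.TTheory GRing.Theory Num.Theory.
Local Open Scope ring_scope.

Definition posr (K a b : int) : int :=
  if (0 < a) && (0 <= b) then b
  else if (a <= 0) && (0 < b) then K - a
  else if (a < 0) && (b <= 0) then 2*K - b
  else 3*K + a.

Lemma posr_spec K a b :
  (0 < a /\ 0 <= b /\ posr K a b = b) \/
  (a <= 0 /\ 0 < b /\ posr K a b = K - a) \/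
  (a < 0 /\ b <= 0 /\ posr K a b = 2*K - b) \/
  (0 <= a /\ b <= 0 /\ ~ (0 < a /\ 0 <= b) /\ ~ (a < 0 /\ b <= 0) /\ posr K a b = 3*K + a).
Proof.
rewrite /posr; case: ifP => /andP H1; first lia.
case: ifP => /andP H2; first lia.
case: ifP => /andP H3; first lia.
lia.
Qed.

Definition phir (K j : int) : int * int :=
  if j < K then (K - j, j)
  else if j < 2*K then (K - j, 2*K - j)
  else if j < 3*K then (j - 3*K, 2*K - j)
  else (j - 3*K, j - 4*K).

Lemma phir_spec K j :
  (j < K /\ phir K j = (K - j, j)) \/
  (K <= j < 2*K /\ phir K j = (K - j, 2*K - j)) \/
  (2*K <= j < 3*K /\ phir K j = (j - 3*K, 2*K - j)) \/
  (3*K <= j /\ phir K j = (j - 3*K, j - 4*K)).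
Proof.
rewrite /phir; case: ifP => H1; first by left; split.
case: ifP => H2; first by right; left; split => //; lia.
case: ifP => H3; first by right; right; left; split => //; lia.
by right; right; right; split => //; lia.
Qed.


Lemma posr_range (k : nat) a b : (0 < k)%N -> (`|a|%N + `|b|%N = k)%N ->
  0 <= posr k a b < 4 * k%:Z.
Proof. move=> Hk Hd; have := posr_spec k a b; lia. Qed.

Lemma phir_posr (k : nat) a b : (0 < k)%N -> (`|a|%N + `|b|%N = k)%N ->
  phir k (posr k a b) = (a, b).
Proof.
move=> Hk Hd; have := posr_spec k a b.
have := phir_spec k (posr k a b).
move=> [[H1 ->]|[[H1 ->]|[[H1 ->]|[H1 ->]]]] H; congr pair; lia.
Qed.

Lemma posr_phir (k : nat) j : (0 < k)%N -> 0 <= j < 4 * k%:Z ->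
  (`|(phir k j).1|%N + `|(phir k j).2|%N = k)%N /\
  posr k (phir k j).1 (phir k j).2 = j.
Proof.
move=> Hk Hj; have := phir_spec k j.
move=> [[H1 ->]|[[H1 ->]|[[H1 ->]|[H1 ->]]]] /=; split; try lia;
  match goal with |- posr _ ?x ?y = _ => have := posr_spec k x y; lia end.
Qed.

Definition data (k : nat) (P q r : int) :=
  0 <= r <= k%:Z /\
  ((P = r /\ q = r) \/ (P = k%:Z + 1 + r /\ q = k%:Z + r) \/
   (P = 2 * k%:Z + 2 + r /\ q = 2 * k%:Z + r) \/
   (P = 3 * k%:Z + 3 + r /\ q = 3 * k%:Z + r)).

Definition adjr (a b c d : int) := (`|a - c|%N + `|b - d|%N = 1)%N.

Lemma inner_data (k : nat) a b : (0 < k)%N -> (`|a|%N + `|b|%N = k.+1)%N ->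
  exists q r, data k (posr k.+1 a b) q r /\
   (forall c d, adjr a b c d -> (`|c|%N + `|d|%N = k)%N ->
      posr k c d = q \/ (q = 4 * k%:Z /\ posr k c d = 0) \/
      (0 < r /\ posr k c d = q - 1)) /\
   (exists c d, adjr a b c d /\ (`|c|%N + `|d|%N = k)%N /\
      (posr k c d = q \/ (q = 4 * k%:Z /\ posr k c d = 0))) /\
   (0 < r -> exists c d, adjr a b c d /\ (`|c|%N + `|d|%N = k)%N /\
      posr k c d = q - 1).
Proof.
rewrite /adjr => Hk Hd.
have := posr_spec k.+1 a b.
move=> [[H1 [H2 H3]]|[[H1 [H2 H3]]|[[H1 [H2 H3]]|[H1 [H2 [H3 [H4 H5]]]]]]].
- exists b, b; split; first by rewrite /data; lia.
  split; first by move=> c d Hcd Hc; have := posr_spec k c d; lia.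
  split; first by exists (a-1), b; have := posr_spec k (a-1) b; lia.
  by move=> Hr; exists a, (b-1); have := posr_spec k a (b-1); lia.
- exists (k%:Z - a), (-a); split; first by rewrite /data; lia.
  split; first by move=> c d Hcd Hc; have := posr_spec k c d; lia.
  split; first by exists a, (b-1); have := posr_spec k a (b-1); lia.
  by move=> Hr; exists (a+1), b; have := posr_spec k (a+1) b; lia.
- exists (2 * k%:Z - b), (-b); split; first by rewrite /data; lia.
  split; first by move=> c d Hcd Hc; have := posr_spec k c d; lia.
  split; first by exists (a+1), b; have := posr_spec k (a+1) b; lia.
  by move=> Hr; exists a, (b+1); have := posr_spec k a (b+1); lia.
- exists (3 * k%:Z + a), a; split; first by rewrite /data; lia.
  split; first by move=> c d Hcd Hc; have := posr_spec k c d; lia.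
  split; first by exists a, (b+1); have := posr_spec k a (b+1); lia.
  by move=> Hr; exists (a-1), b; have := posr_spec k (a-1) b; lia.
Qed.

Definition sig (K h : int) : int :=
  if h < K then h else if h < 2*K then h+1 else if h < 3*K then h+2 else h+3.
Lemma sig_spec K h : (h < K /\ sig K h = h) \/ (K <= h < 2*K /\ sig K h = h+1) \/
  (2*K <= h < 3*K /\ sig K h = h + 2) \/ (3*K <= h /\ sig K h = h+3).
Proof. rewrite /sig; case: ifP => H1; [|case: ifP => H2; [|case: ifP => H3]]; lia. Qed.

Definition inArc (K lo hi p : int) : Prop := p <= hi \/ 4*K + lo <= p.
Definition valid (K lo hi : int) : Prop :=
  - (4 * K) < lo <= 0 /\ 0 <= hi < 4 * K /\ hi - lo <= 4 * K - 2.

Lemma shadow_arith (k : nat) P q r lo hi : (0 < k)%N -> data k P q r -> valid k lo hi ->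
  ( ((q < 4 * k%:Z /\ inArc k lo hi q) \/ (q = 4 * k%:Z /\ inArc k lo hi 0)) /\
    (0 < r -> inArc k lo hi (q-1)) )
  <-> inArc (Posz k.+1) (- sig k (-lo)) (sig k hi) P.
Proof.
move=> Hk; rewrite /data /valid /inArc => Hd Hv.
have := sig_spec k hi; have := sig_spec k (-lo). lia.
Qed.

Lemma seal_arith (k : nat) P q r lo hi slo shi (hp : bool) p (f : int) :
  (0 < k)%N -> data k P q r -> valid k lo hi ->
  slo <= 0 <= shi ->
  ((hp = false /\ hi = shi /\ lo < slo) \/ (hp = true /\ lo = slo /\ shi < hi)) ->
  0 <= p < 4 * k%:Z -> inArc k slo shi p ->
  ((q < 4 * k%:Z /\ p = q) \/ (q = 4 * k%:Z /\ p = 0) \/ (0 < r /\ p = q - 1)) ->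
  1 <= f ->
  (if hp then inArc (Posz k.+1) (- sig k (-lo) - f) (sig k hi) P
   else inArc (Posz k.+1) (- sig k (-lo)) (sig k hi + f) P).
Proof.
move=> Hk; rewrite /data /valid /inArc => Hd Hv Hs Hr Hp Hin Hpq Hf.
have := sig_spec k hi; have := sig_spec k (-lo).
case: hp Hr => Hr; lia.
Qed.

Lemma valid_step (k : nat) lo hi (f : int) : (0 < k)%N -> valid k lo hi -> 0 <= f ->
  f < 4 * (k%:Z + 1) - (sig k hi - (- sig k (-lo)) + 1) ->
  valid (k%:Z + 1) (- sig k (-lo) - f) (sig k hi) /\
  valid (k%:Z + 1) (- sig k (-lo)) (sig k hi + f).
Proof.
move=> Hk; rewrite /valid => Hv Hf HF.
have := sig_spec k hi; have := sig_spec k (-lo); lia.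
Qed.

Lemma size_step (k : nat) lo hi : (0 < k)%N -> valid k lo hi ->
  hi - lo <= sig k hi - (- sig k (-lo)).
Proof.
move=> Hk; rewrite /valid => Hv.
have := sig_spec k hi; have := sig_spec k (-lo); lia.
Qed.

Lemma shadow_valid (k : nat) lo hi : (0 < k)%N -> valid k lo hi ->
  0 <= sig k hi /\ 0 <= sig k (-lo) /\ sig k hi + sig k (-lo) <= 4 * k%:Z + 1.
Proof.
move=> Hk; rewrite /valid => Hv.
have := sig_spec k hi; have := sig_spec k (-lo); lia.
Qed.

Inductive stt := SE | SA of int & int & bool | SF.

Definition normj (K j : int) := if j < 0 then j + 4 * K else j.
Lemma normj_spec K j : (j < 0 /\ normj K j = j + 4 * K) \/ (0 <= j /\ normj K j = j).
Proof. rewrite /normj; case: ifP => H; lia. Qed.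

Definition phiv (v : vertex) (K j : int) : vertex :=
  let p := phir K (normj K j) in (v.1 + p.1, v.2 + p.2).
Definition pts v (K a : int) (n : nat) : seq vertex :=
  [seq phiv v K (a + i%:Z) | i <- iota 0 n].

Definition posv (v : vertex) (k : nat) (x : vertex) := posr k (x.1 - v.1) (x.2 - v.2).
Definition dist (v x : vertex) : nat := (absz (x.1 - v.1) + absz (x.2 - v.2))%N.

Lemma phiv_spec v (k : nat) j : (0 < k)%N -> - (4 * k%:Z) <= j < 4 * k%:Z ->
  dist v (phiv v k j) = k /\ posv v k (phiv v k j) = normj k j.
Proof.
move=> Hk Hj.
have Hn : 0 <= normj k j < 4 * k%:Z by have := normj_spec k j; lia.
have [H1 H2] := posr_phir Hk Hn.
rewrite /dist /posv /phiv /=.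
have -> : v.1 + (phir k (normj k j)).1 - v.1 = (phir k (normj k j)).1 by ring.
have -> : v.2 + (phir k (normj k j)).2 - v.2 = (phir k (normj k j)).2 by ring.
by [].
Qed.

Lemma phiv_posv v (k : nat) x : (0 < k)%N -> dist v x = k ->
  phiv v k (posv v k x) = x.
Proof.
move=> Hk Hd.
have Hr := posr_range (a := x.1 - v.1) (b := x.2 - v.2) Hk Hd.
rewrite /phiv /posv.
have -> : normj k (posr k (x.1 - v.1) (x.2 - v.2)) = posr k (x.1 - v.1) (x.2 - v.2).
  by have := normj_spec k (posr k (x.1 - v.1) (x.2 - v.2)); lia.
rewrite phir_posr //= .
case: x Hd Hr => x1 x2 /= _ _; congr pair; ring.
Qed.

Lemma mem_pts v (k : nat) a n x : (0 < k)%N -> - (4 * k%:Z) <= a -> a + n%:Z <= 4 * k%:Z ->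
  (x \in pts v k a n) <->
  (dist v x = k /\ ((a <= posv v k x < a + n%:Z) \/ (a <= posv v k x - 4 * k%:Z < a + n%:Z))).
Proof.
move=> Hk Ha Han; split.
- case/mapP => i; rewrite mem_iota add0n => /andP [_ Hi] ->.
  have [H1 H2] := phiv_spec v (j := a + i%:Z) Hk (ltac:(lia)).
  split => //; rewrite H2; have := normj_spec k (a + i%:Z); lia.
- move=> [Hd Hp].
  have Hr := posr_range (a := x.1 - v.1) (b := x.2 - v.2) Hk Hd.
  rewrite /posv in Hp Hr.
  set p := posr k (x.1 - v.1) (x.2 - v.2) in Hp Hr.
  have [i [Hi Hai]] : exists i : nat, (i < n)%N /\ normj k (a + i%:Z) = p.
    case: Hp => Hp.
    + exists (absz (p - a)%R); split; first lia.
      have := normj_spec k (a + (absz (p - a)%R)%:Z); lia.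
    + exists (absz (p - 4 * k%:Z - a)%R); split; first lia.
      have := normj_spec k (a + (absz (p - 4 * k%:Z - a)%R)%:Z); lia.
  apply/mapP; exists i; first by rewrite mem_iota add0n Hi.
  rewrite -(phiv_posv Hk Hd) /phiv Hai /posv -/p.
  have -> : normj k p = p by have := normj_spec k p; lia.
  by [].
Qed.

Definition step v (k : nat) (s : stt) (f : nat) : stt * seq vertex :=
  let K := k%:Z in
  match s with
  | SE => if f == 0%N then (SE, [::])
          else if 4 * K <= f%:Z then (SF, pts v K 0 (4 * k))
          else (SA 0 (f%:Z - 1) true, pts v K 0 f)
  | SA lo hi hp =>
     let lo' := - sig (K - 1) (- lo) in
     let hi' := sig (K - 1) hi in
     let F := 4 * K - (hi' - lo' + 1) in
     if F <= f%:Z then (SF, pts v K (hi' + 1) (absz F))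
     else if hp then (SA (lo' - f%:Z) hi' false, pts v K (lo' - f%:Z) f)
     else (SA lo' (hi' + f%:Z) true, pts v K (hi' + 1) f)
  | SF => (SF, [::])
  end.

Fixpoint st v (f : nat -> nat) (k : nat) : stt :=
  match k with 0 => SE | k'.+1 => (step v k (st v f k') (f k)).1 end.
Definition out v (f : nat -> nat) (k : nat) : seq vertex :=
  match k with 0 => [::] | k'.+1 => (step v k (st v f k') (f k)).2 end.

Definition runS v (l : seq nat) : nat * stt * seq vertex :=
  foldl (fun acc fk => let: (k, s, _) := acc in
           let r := step v k.+1 s fk in (k.+1, r.1, r.2)) (0%N, SE, [::]) l.
Definition strat v : online_strategy := fun l => (runS v l).2.

Lemma prefixS (f : nat -> nat) i : Defs.prefix f i.+1 = rcons (Defs.prefix f i) (f i.+1).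
Proof.
have E : iota 1 i.+1 = rcons (iota 1 i) i.+1 by rewrite -cats1 -[i.+1]addn1 iotaD add1n addn1.
by rewrite /Defs.prefix E map_rcons.
Qed.

Lemma runS_prefix v f i : runS v (Defs.prefix f i) = (i, st v f i, out v f i).
Proof.
elim: i => [//|i IH].
by rewrite prefixS /runS -cats1 foldl_cat -/(runS v _) IH.
Qed.

Lemma strat_out v f i : strat v (Defs.prefix f i) = out v f i.
Proof. by rewrite /strat runS_prefix. Qed.

Lemma Kpred (k : nat) : (k.+1)%:Z - 1 = k%:Z.
Proof. lia. Qed.

Arguments sig : simpl never.
Arguments pts : simpl never.

Section States.
Variable v : vertex.
Variable f : nat -> nat.
Local Notation st := (st v f).
Local Notation out := (out v f).

Definition inA k x := match st k with SE => False | SA lo hi _ => inArc k lo hi (posv v k x) | SF => True end.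
Definition inSh k x := match k with 0%N => False | k'.+1 =>
  match st k' with SE => False | SA lo hi _ => inArc k (- sig k' (-lo)) (sig k' hi) (posv v k x) | SF => True end end.

Lemma WF k : match st k with SA lo hi _ => (0 < k)%N /\ valid k lo hi | _ => True end.
Proof.
elim: k => [//|k IH] /=.
case E: (st k) IH => [|lo hi hp|] IH /=.
- case: eqP => Hf /=; first done.
  case: ifP => H /=; first done.
  split => //; rewrite /valid; move/negbT: H; lia.
- case: IH => Hk Hv; rewrite Kpred.
  have [H1 [H2 H3]] := shadow_valid Hk Hv.
  case: ifP => HF /=; first done.
  move/negbT: HF => HF.
  have [Hv1 Hv2] := valid_step (f := (f k.+1)%:Z) Hk Hv (ltac:(lia)) (ltac:(lia)).
  have EK : Posz k.+1 = k%:Z + 1 by lia.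
  by case: (hp) => /=; split => //; rewrite EK.
- done.
Qed.

Lemma posv_range k x : (0 < k)%N -> dist v x = k -> 0 <= posv v k x < 4 * k%:Z.
Proof. move=> Hk Hd; exact: (posr_range (a := x.1 - v.1) (b := x.2 - v.2) Hk Hd). Qed.

Lemma memA_out k x :
  (x \in out k -> dist v x = k) /\
  ((0 < k)%N -> dist v x = k -> (inA k x <-> inSh k x \/ x \in out k)).
Proof.
case: k => [|k]; first by split => // /[swap] /ltnn.
have Hk1 : (0 < k.+1)%N by [].
rewrite /inA /inSh /out /=.
have := WF k.
case E: (st k) => [|lo hi hp|] /= W.
- case: eqP => Hf /=; first by split => // _ _; split => [[]|[[]|]].
  case: ifP => H /=.
  + split; first by rewrite mem_pts //; (case || lia).
    move=> _ Hd; rewrite mem_pts //; try lia.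
    have := posv_range Hk1 Hd; split => // _; right; split => //; lia.
  + split; first by rewrite mem_pts //; (case || lia).
    move=> _ Hd; rewrite mem_pts //; try lia.
    have := posv_range Hk1 Hd; rewrite /inArc; move/negbT: H; lia.
- case: W => Hk Hv; rewrite Kpred.
  have [H1 [H2 H3]] := shadow_valid Hk Hv.
  case: ifP => HF /=.
  + have Hb1 : - (4 * (k.+1)%:Z) <= sig k hi + 1 by lia.
    have Hb2 : sig k hi + 1 + (absz (4 * (k.+1)%:Z - (sig k hi - - sig k (- lo) + 1))%R)%:Z
               <= 4 * (k.+1)%:Z by lia.
    split; first by rewrite mem_pts //; (case || lia).
    move=> _ Hd; rewrite mem_pts //.
    have := posv_range Hk1 Hd; rewrite /inArc; split => // _; lia.
  + move/negbT: HF => HF.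
    case: (hp) => /=.
    * have Hb1 : - (4 * (k.+1)%:Z) <= - sig k (- lo) - (f k.+1)%:Z by lia.
      have Hb2 : - sig k (- lo) - (f k.+1)%:Z + (f k.+1)%:Z <= 4 * (k.+1)%:Z by lia.
      split; first by rewrite mem_pts //; (case || lia).
      move=> _ Hd; rewrite mem_pts //.
      have := posv_range Hk1 Hd; rewrite /inArc; lia.
    * have Hb1 : - (4 * (k.+1)%:Z) <= sig k hi + 1 by lia.
      have Hb2 : sig k hi + 1 + (f k.+1)%:Z <= 4 * (k.+1)%:Z by lia.
      split; first by rewrite mem_pts //; (case || lia).
      move=> _ Hd; rewrite mem_pts //.
      have := posv_range Hk1 Hd; rewrite /inArc; lia.
- by split => // _ _; split => // _; left.
Qed.

Lemma out_dist k x : x \in out k -> dist v x = k.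
Proof. exact: (memA_out k x).1. Qed.

Lemma memA k x : (0 < k)%N -> dist v x = k -> (inA k x <-> inSh k x \/ x \in out k).
Proof. exact: (memA_out k x).2. Qed.

Lemma out_size k : (size (out k) <= f k)%N.
Proof.
case: k => [//|k]; rewrite /out /=.
have := WF k.
case E: (st k) => [|lo hi hp|] /= W.
- case: eqP => Hf /=; first by [].
  case: ifP => H /=; rewrite /pts size_map size_iota //; lia.
- case: W => Hk Hv; rewrite Kpred.
  have [H1 [H2 H3]] := shadow_valid Hk Hv.
  case: ifP => HF /=; first by rewrite /pts size_map size_iota; lia.
  by case: (hp); rewrite /= /pts size_map size_iota.
- by [].
Qed.

Lemma st_early M : (forall i, (1 <= i)%N -> (i < M)%N -> f i = 0%N) ->
  forall k, (k < M)%N -> st k = SE.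
Proof.
move=> H0; elim=> [//|k IH] HkM /=.
by rewrite IH ?(ltnW HkM) //= H0.
Qed.

Lemma f_pos M : (forall i, (1 <= i)%N -> (i < M)%N -> f i = 0%N) ->
  (forall i, (M <= i)%N -> (1 <= f i)%N) ->
  forall k, st k <> SE -> (1 <= f k.+1)%N.
Proof.
move=> H0 H1 k Hk; apply: H1.
case: (ltnP k M) => HkM; last exact: leqW.
by move: Hk; rewrite (st_early H0 HkM).
Qed.

Lemma adj_rel x y : adjacent y x <-> adjr (x.1 - v.1) (x.2 - v.2) (y.1 - v.1) (y.2 - v.2).
Proof. rewrite /adjacent /adjr; lia. Qed.

Lemma adj_dist x y : adjacent y x -> dist v y = (dist v x).+1 \/ dist v x = (dist v y).+1.
Proof. rewrite /adjacent /dist; lia. Qed.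

Lemma relmk c d : ((v.1 + c, v.2 + d).1 - v.1 = c) /\ ((v.1 + c, v.2 + d).2 - v.2 = d).
Proof. by split; rewrite /=; lia. Qed.

Lemma mk_adj x c d : adjr (x.1 - v.1) (x.2 - v.2) c d -> adjacent (v.1 + c, v.2 + d) x.
Proof. by rewrite adj_rel; have [-> ->] := relmk c d. Qed.

Lemma mk_dist c d : dist v (v.1 + c, v.2 + d) = (`|c| + `|d|)%N.
Proof. by rewrite /dist; have [-> ->] := relmk c d. Qed.

Lemma mk_pos k c d : posv v k (v.1 + c, v.2 + d) = posr k c d.
Proof. by rewrite /posv; have [-> ->] := relmk c d. Qed.

Lemma shadowA k x : (0 < k)%N -> dist v x = k.+1 ->
  (inSh k.+1 x <-> forall y, adjacent y x -> dist v y = k -> inA k y).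
Proof.
move=> Hk Hd.
have [q [r [Hdat [Hall [Hex1 Hex2]]]]] :=
  inner_data (a := x.1 - v.1) (b := x.2 - v.2) Hk Hd.
have EK : Posz k.+1 = k%:Z + 1 by lia.
rewrite /inSh /inA.
have := WF k.
case E: (st k) => [|lo hi hp|] W.
- split => // H.
  case: Hex1 => c [d [Hadj [Hcd _]]].
  apply: (H (v.1 + c, v.2 + d)); first exact: mk_adj.
  by rewrite mk_dist.
- case: W => _ Hv.
  have Hsh := shadow_arith Hk Hdat Hv.
  rewrite (_ : posv v k.+1 x = posr k.+1 (x.1 - v.1) (x.2 - v.2)) // -Hsh; split.
  + move=> [Hin1 Hin2] y Hadj Hdy.
    have Hadj' := (adj_rel x y).1 Hadj.
    have := Hall _ _ Hadj' Hdy.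
    have := posv_range Hk Hdy; rewrite /posv.
    move: Hin1 Hin2; rewrite /inArc /posv; lia.
  + move=> H.
    case: Hex1 => c1 [d1 [Hadj1 [Hcd1 Hp1]]].
    have := H _ (mk_adj Hadj1) (ltac:(by rewrite mk_dist)).
    rewrite mk_pos => Hin1.
    have := posr_range Hk Hcd1.
    move: Hdat; rewrite /data => Hdat.
    split; first by move: Hin1; rewrite /inArc; lia.
    move=> Hr; case: (Hex2 Hr) => c2 [d2 [Hadj2 [Hcd2 Hp2]]].
    have := H _ (mk_adj Hadj2) (ltac:(by rewrite mk_dist)).
    rewrite mk_pos => Hin2.
    by rewrite -Hp2.
- by split => // _ y _ _.
Qed.

Lemma shadowA_ex k x : (0 < k)%N -> dist v x = k.+1 -> ~ inSh k.+1 x ->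
  exists y, adjacent y x /\ dist v y = k /\ ~ inA k y.
Proof.
move=> Hk Hd Hn.
apply: Classical_Prop.NNPP => Hne; apply: Hn.
apply/(shadowA Hk Hd) => y Hadj Hdy.
apply: Classical_Prop.NNPP => Hy; apply: Hne; by exists y.
Qed.

Lemma adj_sym x y : adjacent y x -> adjacent x y.
Proof. rewrite /adjacent; lia. Qed.

Lemma stS k : st k.+1 = (step v k.+1 (st k) (f k.+1)).1.
Proof. by []. Qed.

Lemma sealA M : (forall i, (1 <= i)%N -> (i < M)%N -> f i = 0%N) ->
  (forall i, (M <= i)%N -> (1 <= f i)%N) ->
  forall k x y, (0 < k)%N -> dist v x = k -> inSh k x -> adjacent y x ->
  dist v y = k.+1 -> inA k.+1 y.
Proof.
move=> H0 H1; case=> [//|k] x y _ Hdx Hsh Hadj Hdy.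
rewrite /inSh in Hsh.
have := WF k.
case E: (st k) Hsh => [|lo0 hi0 hp0|] Hsh W //; last by rewrite /inA stS stS E.
case: W => Hk Hv.
have Hf1 : (1 <= f k.+1)%N by apply: (f_pos H0 H1); rewrite E.
have [S1 [S2 S3]] := shadow_valid Hk Hv.
set slo := - sig k (- lo0) in Hsh *; set shi := sig k hi0 in Hsh *.
have HS : st k.+1 = SF \/ exists lo hi hp, st k.+1 = SA lo hi hp /\
   ((hp = false /\ hi = shi /\ lo < slo) \/ (hp = true /\ lo = slo /\ shi < hi)).
  rewrite stS E /step Kpred /=.
  case: ifP => HF1 /=; [by left | right].
  case: (hp0) => /=.
  - by exists (slo - (f k.+1)%:Z), shi, false; split => //; left; lia.
  - by exists slo, (shi + (f k.+1)%:Z), true; split => //; right; lia.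
case: HS => [EF | [lo [hi [hp [Est HR]]]]]; first by rewrite /inA stS EF.
have Hf2 : (1 <= f k.+2)%N by apply: (f_pos H0 H1); rewrite Est.
have := WF k.+1; rewrite Est => -[Hk1 Hv1].
rewrite /inA stS Est /step Kpred /=.
case: ifP => HF2 /=; first by [].
move/negbT: HF2 => HF2.
have [q [r [Hdat [Hall _]]]] :=
  inner_data (a := y.1 - v.1) (b := y.2 - v.2) Hk1 Hdy.
have Hxy := (adj_rel y x).1 (adj_sym Hadj).
have Hp := Hall _ _ Hxy Hdx.
have Hpr := posv_range Hk1 Hdx.
have := seal_arith (f := (f k.+2)%:Z) (p := posv v k.+1 x) (hp := hp) (slo := slo) (shi := shi) (lo := lo) (hi := hi) (q := q) (r := r) (P := posr k.+2 (y.1 - v.1) (y.2 - v.2)) Hk1 Hdat Hv1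
  (ltac:(rewrite /slo /shi; lia)) HR Hpr Hsh (ltac:(move: Hp Hpr; rewrite /posv; lia)) (ltac:(lia)).
by case: (hp).
Qed.
End States.

Section Game.
Variable v : vertex.
Variable f : nat -> nat.
Variable M : nat.
Hypothesis H0 : forall i, (1 <= i)%N -> (i < M)%N -> f i = 0%N.
Hypothesis H1 : forall i, (M <= i)%N -> (1 <= f i)%N.
Local Notation s := (strat v).

Lemma burnS t x : burning v s f t.+1 x <-> burning v s f t x \/
  (~ (protected v s f t x \/ x \in out v f t.+1) /\ exists y, adjacent y x /\ burning v s f t y).
Proof. by rewrite /burning /protected /= strat_out. Qed.

Lemma protS t x : protected v s f t.+1 x <-> protected v s f t x \/ x \in out v f t.+1.
Proof. by rewrite /protected /= strat_out. Qed.

Lemma dist0 x : dist v x = 0%N <-> x = v.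
Proof.
split; last by move=> ->; rewrite /dist !subrr.
rewrite /dist => H.
have E1 : x.1 = v.1 by lia.
have E2 : x.2 = v.2 by lia.
by rewrite [x]surjective_pairing [v]surjective_pairing E1 E2.
Qed.

Lemma game_inv t :
  (forall x, burning v s f t x <->
     ((dist v x <= t)%N /\ (dist v x = 0%N \/ ~ inA v f (dist v x) x))) /\
  (forall x, protected v s f t x <->
     ((1 <= dist v x)%N /\ (dist v x <= t)%N /\ x \in out v f (dist v x))).
Proof.
elim: t => [|t [IHB IHP]].
  split => x.
  - rewrite /burning /=; split => [->|[Hd _]].
    + by rewrite /dist !subrr; split => //; left.
    + by apply/dist0; lia.
  - rewrite /protected /=; split => // - [Ha [Hb _]]; lia.
split => x; last first.
  rewrite protS; split.
  - move=> [/IHP [Ha [Hb Hc]]|Hout]; first by split => //; split => //; lia.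
    by have Hd := out_dist Hout; rewrite Hd; split => //; split.
  - move=> [Ha [Hb Hc]].
    case: (ltngtP (dist v x) t.+1) => Hd; [left; apply/IHP; split => //; split => //; lia | lia | ].
    by right; rewrite -Hd.
rewrite burnS.
set d := dist v x.
have Hdd : dist v x = d by [].
have [Hle|[Heq|Hgt]] : (d <= t)%N \/ d = t.+1 \/ (t.+1 < d)%N by lia.
- split.
  + move=> [/IHB [Ha Hb] | [Hnp [y [Hadj Hby]]]]; first by split => //; lia.
    split; first by lia.
    case: (posnP d) => [->|Hd0]; first by left.
    right => HA.
    have [Hsh|Hout] := (@memA v f d x Hd0 Hdd).1 HA.
    * case/IHB: Hby => Hdy Hy.
      case: (@adj_dist v x y Hadj) => Edy.
      - have := @sealA v f M H0 H1 d x y Hd0 Hdd Hsh Hadj; rewrite -Hdd Edy => /(_ erefl) HA'.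
        by case: Hy; rewrite Edy.
      - move: Hsh; rewrite -Hdd Edy.
        case: (posnP (dist v y)) => [->//|Hy0] Hsh.
        have := (@shadowA v f (dist v y) x Hy0 (ltac:(by rewrite -Edy))).1 Hsh _ Hadj erefl.
        by case: Hy => // ->.
    * by apply: Hnp; left; apply/IHP; split => //; split.
  + by move=> [Ha Hb]; left; apply/IHB.
- have nB : ~ burning v s f t x by move/IHB; lia.
  have nP : ~ protected v s f t x by move/IHP; lia.
  split.
  + move=> [//|[Hnp [y [Hadj Hby]]]].
    split; first by lia.
    right => HA.
    have Hd0 : (0 < d)%N by lia.
    have [Hsh|Hout] := (@memA v f d x Hd0 Hdd).1 HA; last by apply: Hnp; right; rewrite -Heq.
    case/IHB: Hby => Hdy Hy.
    case: (@adj_dist v x y Hadj) => Edy; first by lia.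
    move: Hsh; rewrite -Hdd Edy.
    case: (posnP (dist v y)) => [->//|Hy0] Hsh.
    have := (@shadowA v f (dist v y) x Hy0 (ltac:(by rewrite -Edy))).1 Hsh _ Hadj erefl.
    by case: Hy => // ->.
  + move=> [_ [Hd0|HnA]]; first by lia.
    have Hd0 : (0 < d)%N by lia.
    right; split.
    * move=> [//|Hout]; apply: HnA; apply/(@memA v f d x Hd0 Hdd); right; by rewrite Heq.
    * case: (posnP t) => [Et|Ht].
      - exists v; split; last by rewrite Et.
        by move: Hdd; rewrite Heq Et /dist /adjacent; lia.
      - have Hnsh : ~ inSh v f t.+1 x.
          by move=> Hsh; apply: HnA; apply/(@memA v f d x Hd0 Hdd); left; rewrite Heq.
        have [y [Hadj [Hdy HnAy]]] := @shadowA_ex v f t x Ht (ltac:(by rewrite Hdd Heq)) Hnsh.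
        exists y; split => //; apply/IHB; split; first by rewrite Hdy.
        by right; rewrite Hdy.
- split.
  + move=> [/IHB [Ha _]|[_ [y [Hadj /IHB [Hdy _]]]]]; first by lia.
    by case: (@adj_dist v x y Hadj); lia.
  + by move=> [Ha _]; lia.
Qed.
End Game.

Lemma size_inv v f k : match st v f k with
  | SE => (\sum_(1 <= i < k.+1) f i = 0)%N
  | SA lo hi _ => ((\sum_(1 <= i < k.+1) f i)%N%:Z <= hi - lo + 1)
  | SF => True end.
Proof.
elim: k => [|k IH]; first by rewrite big_geq.
rewrite stS big_nat_recr //=.
have := WF v f k.
case E: (st v f k) IH => [|lo hi hp|] IH W.
- rewrite /step /=; case: eqP => Hf /=; first by rewrite IH Hf.
  by case: ifP => H //=; rewrite IH; lia.
- case: W => Hk Hv; rewrite /step Kpred /=.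
  have := size_step Hk Hv.
  case: ifP => HF //=; by case: (hp) => /=; lia.
- by [].
Qed.

Lemma st_full v f N : (1 <= N)%N -> (4 * N <= \sum_(1 <= i < N.+1) f i)%N ->
  st v f N = SF.
Proof.
case: N => [//|N] _.
rewrite stS big_nat_recr //=.
have := size_inv v f N; have := WF v f N.
case E: (st v f N) => [|lo hi hp|] W IH HS.
- rewrite /step /=; case: eqP => Hf /=; first by lia.
  by case: ifP => H //=; lia.
- case: W => Hk Hv; rewrite /step Kpred /=.
  have := size_step Hk Hv.
  by case: ifP => HF //=; lia.
- by [].
Qed.

Local Close Scope ring_scope.

Theorem theorem2 (v : vertex) :
  exists s : online_strategy,
    forall f : nat -> nat,
      (exists N, (1 <= N)%N /\ (4 * N <= \sum_(1 <= i < N.+1) f i)%N) ->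
      (exists M, (1 <= M)%N /\
         (forall i, (M <= i)%N -> (1 <= f i)%N) /\
         (forall i, (1 <= i)%N -> (i < M)%N -> f i = 0%N)) ->
      legal_play v s f /\ player1_wins v s f.
Proof.
exists (strat v) => f [N [HN HS]] [M [HM [H1 H0]]].
have INV := @game_inv v f M H0 H1.
split.
- move=> i Hi; split; first by rewrite strat_out; apply: out_size.
  move=> x; rewrite strat_out => Hx.
  have Hd := out_dist Hx.
  split.
  + by move/((INV i.-1).1 x) => [Hle _]; lia.
  + by move/((INV i.-1).2 x) => [_ [Hle _]]; lia.
- exists N; split => // x /((INV N).1 x) [Hd Hx].
  apply/((INV N.-1).1 x).
  have Hfull := st_full v HN HS.
  case: (ltngtP (dist v x) N) => Hc; [split => //; lia | lia |].
  exfalso; case: Hx => [|Hn]; first lia.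
  by apply: Hn; rewrite Hc /inA Hfull.
Qed.
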